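(* Let $\mathcal{J}$ be a Jordan algebra of finite dimension $n$ over a field $\mathcal{F}$ of characteristic different from $2$, let $\Lambda=(\lambda_{i,j})_{i,j=1,\dots,n}$ be an $n\times n$ matrix all of whose entries are non-zero elements of $\mathcal{F}$, and let $\mathcal{V}$ be a basis of $\mathcal{J}$. Let $\Delta:\mathcal{J}\to\mathcal{J}$ be a map such that for every $x,y\in\mathcal{J}$ there is an automorphism $\Phi_{x,y}$ of $\mathcal{J}$ which is $\Lambda$-symmetric with respect to $\mathcal{V}$ and satisfies $\Delta(x)=\Phi_{x,y}(x)$ and $\Delta(y)=\Phi_{x,y}(y)$. Then $\Delta$ is an automorphism.
   Context: For a linear map $\psi$ on $\mathcal{J}$ and the ordered basis $\mathcal{V}=(v_1,\dots,v_n)$, the matrix of $\psi$ is $(x_{i,j})$ with $\psi(v_j)=\sum_i x_{i,j}v_i$; $\psi$ is $\Lambda$-symmetric with respect to $\mathcal{V}$ if this matrix equals $(\lambda_{i,j}a_{i,j})_{i,j}$ for some symmetric matrix $(a_{i,j})$. *)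

(* Defs.v *)
From mathcomp Require Import all_boot all_algebra.
Set Implicit Arguments. Unset Strict Implicit. Unset Printing Implicit Defensive.
Import GRing.Theory.
Local Open Scope ring_scope.

(* Bilinearity follows from left linearity and
   commutativity. *)
Definition is_jordan_product (F : fieldType) (J : vectType F)
    (mul : J -> J -> J) : Prop :=
  [/\ forall (a : F) (x y z : J), mul (a *: x + y) z = a *: mul x z + mul y z,
      forall x y : J, mul x y = mul y x &
      forall x y : J, mul (mul x y) (mul x x) = mul x (mul y (mul x x))].

Definition is_automorphism (F : fieldType) (J : vectType F)
    (mul : J -> J -> J) (f : J -> J) : Prop :=
  [/\ forall (a : F) (x y : J), f (a *: x + y) = a *: f x + f y,
      bijective f &
      forall x y : J, f (mul x y) = mul (f x) (f y)].

Definition mx_of_map (F : fieldType) (J : vectType F) (n : nat)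
    (vs : n.-tuple J) (psi : J -> J) : 'M[F]_n :=
  \matrix_(i < n, j < n) coord vs i (psi (tnth vs j)).

Definition lambda_symmetric (F : fieldType) (J : vectType F) (n : nat)
    (Lam : 'M[F]_n) (vs : n.-tuple J) (psi : J -> J) : Prop :=
  exists A : 'M[F]_n, A^T = A /\
    forall i j : 'I_n, mx_of_map vs psi i j = Lam i j * A i j.

(* Main.v *)
Require Import Defs.
From HB Require Import structures.
From mathcomp Require Import all_boot all_algebra.
Import GRing.Theory.
Local Open Scope ring_scope.
Section S.
Variables (F : fieldType) (J : vectType F) (f : J -> J).
Hypothesis hf : forall (a : F) (x y : J), f (a *: x + y) = a *: f x + f y.
Definition ff := f.
Lemma hff : linear ff. Proof. by move=> a x y; apply: hf. Qed.
HB.instance Definition _ := GRing.isLinear.Build F J J *:%R ff hff.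
Lemma lin_bij : injective f -> bijective f.
Proof.
move=> inj.
have k0 : lker (linfun ff) == 0%VS.
  apply/lker0P => x y; rewrite !lfunE /=; exact: inj.
exists ((linfun ff)^-1%VF) => x.
  have := lker0_lfunK k0 x; by rewrite lfunE.
have := lker0_lfunVK k0 x; by rewrite lfunE.
Qed.
End S.

Lemma lin_props (F : fieldType) (J : vectType F) (Phi : J -> J) :
  (forall (a : F) (x y : J), Phi (a *: x + y) = a *: Phi x + Phi y) ->
  [/\ Phi 0 = 0, forall x y, Phi (x + y) = Phi x + Phi y &
      forall (a : F) x, Phi (a *: x) = a *: Phi x].
Proof.
move=> hl.
have h0 : Phi 0 = 0.
  have e := hl 1 0 0; rewrite !scale1r !addr0 in e.
  by apply: (addrI (Phi 0)); rewrite addr0 -e.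
split=> //.
  by move=> x y; rewrite -{1}(scale1r x) hl scale1r.
by move=> a x; rewrite -{1}(addr0 (a *: x)) hl h0 addr0.
Qed.

Lemma aut_lin (F : fieldType) (J : vectType F) (mul : J -> J -> J) (Phi : J -> J) :
  is_automorphism mul Phi ->
  [/\ Phi 0 = 0, forall x y, Phi (x + y) = Phi x + Phi y &
      forall (a : F) x, Phi (a *: x) = a *: Phi x].
Proof. by case=> hl _ _; apply: lin_props. Qed.

Lemma sq_exp (F : fieldType) (J : vectType F) (mul : J -> J -> J) :
  is_jordan_product mul -> forall x y,
  mul (x + y) (x + y) = mul x x + mul y y + 2%:R *: mul x y.
Proof.
case=> hl hc _ x y.
have hD u v w : mul (u + v) w = mul u w + mul v w.
  by rewrite -{1}(scale1r u) hl scale1r.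
rewrite hD !(hc _ (x + y)) !hD (hc y x) scaler_nat mulr2n.
by rewrite [RHS]addrACA [mul y y + _]addrC.
Qed.

Theorem theorem4p1 (F : fieldType) (hF : (2%:R : F) != 0)
  (J : vectType F) (mul : J -> J -> J) (hJ : is_jordan_product mul)
  (n : nat) (hn : \dim (fullv : {vspace J}) = n)
  (Lam : 'M[F]_n) (hLam : forall i j : 'I_n, Lam i j != 0)
  (vs : n.-tuple J) (hvs : basis_of fullv vs)
  (Delta : J -> J)
  (hDelta : forall x y : J, exists Phi : J -> J,
      [/\ is_automorphism mul Phi, lambda_symmetric Lam vs Phi,
          Delta x = Phi x & Delta y = Phi y]) :
  is_automorphism mul Delta.
Proof.
have expand v : v = \sum_i coord vs i v *: vs`_i.
  by apply: coord_span; rewrite (span_basis hvs) memvf.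
have eqc u v : (forall i, coord vs i u = coord vs i v) -> u = v.
  by move=> h; rewrite (expand u) (expand v); apply: eq_bigr => i _; rewrite h.
pose c (i j : 'I_n) := Lam i j * (coord vs j (Delta vs`_i) / Lam j i).
have hc x i : coord vs i (Delta x) = \sum_j coord vs j x * c i j.
  have [Phi [hP [A [hA hM]] -> hPi]] := hDelta x vs`_i.
  have [P0 PD PZ] := @aut_lin _ _ _ _ hP.
  have Psum : forall (I : Type) (r : seq I) (Q : pred I) (G : I -> J),
      Phi (\sum_(k <- r | Q k) G k) = \sum_(k <- r | Q k) Phi (G k).
    by move=> I r Q G; apply: (big_morph Phi PD P0).
  rewrite {1}(expand x) Psum linear_sum; apply: eq_bigr => j _.
  rewrite PZ linearZ /=; congr (_ * _).
  have := hM i j; have := hM j i; rewrite !mxE !(tnth_nth 0) => e1 e2.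
  idtac.
  rewrite e2 /c hPi e1.
  have -> : A j i = A i j by rewrite -[in RHS]hA mxE.
  by rewrite mulrAC divff ?mul1r.
have hlin a x y : Delta (a *: x + y) = a *: Delta x + Delta y.
  apply: eqc => i; rewrite linearP /= !hc mulr_sumr -big_split /=.
  by apply: eq_bigr => j _; rewrite linearP /= mulrDl [in RHS]mulrA.
have [D0 DD DZ] := @lin_props _ _ _ hlin.
have hsq x : Delta (mul x x) = mul (Delta x) (Delta x).
  by have [Phi [[_ _ hm] _ -> ->]] := hDelta (mul x x) x.
have hinj : injective Delta.
  move=> x y e.
  have : Delta (x - y) = 0.
    by rewrite -scaleN1r addrC hlin e scaleN1r addNr.
  have [Phi [hP _ -> _]] := hDelta (x - y) (x - y).
  have [P0 _ _] := @aut_lin _ _ _ _ hP.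
  case: hP => _ [g gK _] e2.
  move=> e3; apply: subr0_eq; by rewrite -(gK (x - y)) e3 -{1}P0 gK.
split=> //; first exact: (@lin_bij _ _ _ hlin).
move=> x y.
have e := hsq (x + y).
rewrite !sq_exp // DD DD DZ DD !hsq in e.
rewrite sq_exp // in e.
apply: (scalerI hF); exact: (addrI _ e).
Qed.
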